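(* Let $G$ be a countable infinite discrete group, $X$ an infinite compact Hausdorff space and $\beta: G\curvearrowright X$ a minimal, topologically free continuous action with no $G$-invariant regular Borel probability measure and with dynamical comparison. Let $Y$ be a compact Hausdorff space and $\alpha: G\curvearrowright X\times Y$ the action $\alpha_g(x,y)=(\beta_g(x),y)$; let $\pi_Y: X\times Y\to Y$ be the projection. Then: (i) every $G$-invariant closed subset $M\subset X\times Y$ satisfies $M=X\times\pi_Y(M)$; (ii) $\alpha$ is essentially free.
   Context: Subequivalence for $\beta$: for closed $F$ and open $O$ in $X$, $F\prec O$ if there exist a finite open cover $\mathcal{U}$ of $F$ and $s_U\in G$ with the sets $\beta_{s_U}(U)$ pairwise disjoint subsets of $O$; for open $V$, $V\prec O$ means $F\prec O$ for all closed $F\subset V$. Dynamical comparison: $V\prec O$ for every open $V$ and nonempty open $O$ with $\mu(V)<\mu(O)$ for all $G$-invariant regular Borel probability measures $\mu$. Topologically free: fixed point sets of non-identity elements have empty interior. Essentially free: for every closed $G$-invariant subset $Z$ the set of points of $Z$ with trivial stabilizer is dense in $Z$. *)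

(* Defs.v *)
From mathcomp Require Import all_boot all_order all_algebra.
From mathcomp Require Import all_classical all_reals all_analysis.
Set Implicit Arguments. Unset Strict Implicit. Unset Printing Implicit Defensive.
Import Order.TTheory GRing.Theory Num.Theory.
Local Open Scope classical_set_scope.
Local Open Scope ring_scope.

Definition is_group (G : Type) (mul : G -> G -> G) (one : G) (inv : G -> G) :=
  [/\ (forall a b c, mul a (mul b c) = mul (mul a b) c),
      (forall a, mul one a = a), (forall a, mul a one = a),
      (forall a, mul (inv a) a = one) & (forall a, mul a (inv a) = one)].

Definition is_action (G T : Type) (mul : G -> G -> G) (one : G)
  (act : G -> T -> T) :=
  (forall x, act one x = x) /\
  (forall g h x, act (mul g h) x = act g (act h x)).

Definition invariant_set (G T : Type) (act : G -> T -> T) (A : set T) :=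
  forall g x, A x -> A (act g x).

Definition minimal_action (G : Type) (X : topologicalType) (act : G -> X -> X) :=
  forall A : set X, closed A -> invariant_set act A -> A = set0 \/ A = setT.

Definition topologically_free (G : Type) (one : G) (X : topologicalType)
  (act : G -> X -> X) :=
  forall g, g <> one -> interior [set x | act g x = x] = set0.

Definition essentially_free (G : Type) (one : G) (X : topologicalType)
  (act : G -> X -> X) :=
  forall Z : set X, closed Z -> invariant_set act Z ->
    Z `<=` closure [set z | Z z /\ (forall g, act g z = z -> g = one)].

Definition subequiv_closed (G : Type) (X : topologicalType) (act : G -> X -> X)
  (F O : set X) :=
  exists (n : nat) (U : nat -> set X) (s : nat -> G),
    [/\ (forall i, (i < n)%N -> open (U i)),
        F `<=` \bigcup_(i in `I_n) U i,
        (forall i, (i < n)%N -> act (s i) @` U i `<=` O) &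
        (forall i j, (i < n)%N -> (j < n)%N -> i <> j ->
           act (s i) @` U i `&` act (s j) @` U j = set0)].

Definition subequiv_open (G : Type) (X : topologicalType) (act : G -> X -> X)
  (V O : set X) :=
  forall F : set X, closed F -> F `<=` V -> subequiv_closed act F O.

Notation borelType X := (g_sigma_algebraType (@open X)).

Definition inv_reg_borel_prob (G : Type) (X : ptopologicalType) (R : realType)
  (act : G -> X -> X) (mu : {measure set (borelType X) -> \bar R}) :=
  [/\ mu setT = 1%E,
      (forall A : set (borelType X), measurable A ->
         mu A = ereal_inf [set mu U | U in [set U : set X | open U /\ A `<=` U]]),
      (forall A : set (borelType X), measurable A ->
         mu A = ereal_sup [set mu K | K in [set K : set X | compact K /\ K `<=` A]]) &
      (forall g (A : set (borelType X)), measurable A ->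
         mu (act g @^-1` A) = mu A)].

Definition dynamical_comparison (G : Type) (X : ptopologicalType) (R : realType)
  (act : G -> X -> X) :=
  forall V O : set X, open V -> open O -> O !=set0 ->
    (forall mu : {measure set (borelType X) -> \bar R},
        inv_reg_borel_prob act mu -> (mu V < mu O)%E) ->
    subequiv_open act V O.

Definition prod_action (G : Type) (X Y : Type) (beta : G -> X -> X) :
  G -> X * Y -> X * Y := fun g p => (beta g p.1, p.2).

(* Main.v *)
Require Import Defs.
From mathcomp Require Import all_boot all_order all_algebra.
From mathcomp Require Import all_classical all_reals all_analysis.
Local Open Scope classical_set_scope.
Local Open Scope ring_scope.

Lemma fix_closed (X : topologicalType) (HX : hausdorff_space X) (f : X -> X)
  (cf : continuous f) : closed [set x | f x = x].
Proof.
move=> x clx; apply: HX => A B nA nB /=.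
have nfA : nbhs x (f @^-1` A) by exact: cf.
have [z [/= fz [Az Bz]]] := clx _ (filterI nfA nB).
by exists z; split => //; rewrite -fz.
Qed.

Lemma baire_compact (X : ptopologicalType) (HX : hausdorff_space X)
  (cX : compact [set: X]) (F : nat -> set X) (Fcl : forall n, closed (F n))
  (Fint : forall n, interior (F n) = set0) (U : set X) (oU : open U)
  (neU : U !=set0) : exists x, U x /\ forall n, ~ F n x.
Proof.
have step : forall n (V : set X), open V -> V !=set0 ->
    exists W : set X, [/\ open W, W !=set0 & closure W `<=` V `\` F n].
  move=> n V oV [v Vv].
  have oD : open (V `\` F n) by apply: openI => //; exact: closed_openC.
  have [x [Vx nFx]] : (V `\` F n) !=set0.
    apply: contrapT => hne; have : interior (F n) v.
      apply: (@filterS _ _ _ V); last exact: open_nbhs_nbhs.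
      move=> w Vw; apply: contrapT => nF; apply: hne; by exists w.
    by rewrite Fint.
  have nx : nbhs x (V `\` F n) by apply: open_nbhs_nbhs.
  have [D nD cD] := @compact_regular X x setT HX cX filterT _ nx.
  exists (interior D); split; first exact: open_interior.
    by exists x.
  by move=> z /(closureS (@interior_subset _ D)) /cD.
have H1 : forall n (V : set X), exists W : set X, (open V /\ V !=set0) ->
    [/\ open W, W !=set0 & closure W `<=` V `\` F n].
  move=> n V; have [[oV nV]|h] := pselect (open V /\ V !=set0).
    by have [W HW] := step n V oV nV; exists W.
  by exists set0.
have /choice [g hg] : forall n, exists gn : set X -> set X,
  forall V, (open V /\ V !=set0) -> [/\ open (gn V), gn V !=set0 & closure (gn V) `<=` V `\` F n].
  by move=> n; have [gn hgn] := choice (H1 n); exists gn.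
pose Vs := fix Vs n := if n is m.+1 then g m (Vs m) else U.
have Vprop : forall n, open (Vs n) /\ Vs n !=set0.
  elim=> [|n [oV nV]] //=; by have [] := hg n (Vs n) (conj oV nV).
have Vsub : forall n, closure (Vs n.+1) `<=` Vs n `\` F n.
  by move=> n; have [] := hg n (Vs n) (Vprop n).
have Vmono : forall i k, Vs (i + k)%N `<=` Vs i.
  move=> i; elim=> [|k IH]; first by rewrite addn0.
  move=> z; rewrite addnS => /subset_closure /Vsub [] /IH //.
have cX2 := cX; rewrite compact_In0 in cX2.
have := cX2 nat setT (fun n => closure (Vs n.+1)).
case.
- exists (fun n => closure (Vs n.+1)) => [n _|n _]; first exact: closed_closure.
  by rewrite setTI.
- move=> D' _; pose m := (\max_(i <- finmap.enum_fset D') i)%N.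
  have [z Vz] := (Vprop m.+1).2.
  exists z => i /= iD.
  have lim : (i <= m)%N by apply: (@leq_bigmax_seq _ _ xpredT id i).
  apply: subset_closure; have := Vmono i.+1 (m - i)%N; rewrite addSn subnKC //; apply; exact: Vz.
- move=> z hz; exists z; split.
    by have [] := Vsub 0 z (hz 0%N I).
  by move=> n Fz; have [] := Vsub n z (hz n I).
Qed.

Theorem proposition5p1
  (G : Type) (mul : G -> G -> G) (one : G) (inv : G -> G)
  (HG : is_group mul one inv)
  (Gcount : countable [set: G]) (Ginf : infinite_set [set: G])
  (X : ptopologicalType) (HX : hausdorff_space X) (cX : compact [set: X])
  (Xinf : infinite_set [set: X])
  (R : realType)
  (beta : G -> X -> X) (Hbeta : is_action mul one beta)
  (cbeta : forall g, continuous (beta g))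
  (minb : minimal_action beta) (tfree : topologically_free one beta)
  (nomeas : forall mu : {measure set (borelType X) -> \bar R},
      ~ inv_reg_borel_prob beta mu)
  (comp : dynamical_comparison R beta)
  (Y : topologicalType) (HY : hausdorff_space Y) (cY : compact [set: Y]) :
  (forall M : set (X * Y), closed M ->
      invariant_set (prod_action (Y:=Y) beta) M ->
      M = [set: X] `*` (snd @` M)) /\
  essentially_free one (prod_action (Y:=Y) beta).
Proof.
have slice : forall M : set (X * Y), closed M ->
    invariant_set (prod_action (Y:=Y) beta) M ->
    forall x y, M (x, y) -> forall x', M (x', y).
  move=> M clM invM x y Mxy x'.
  pose S := (fun z : X => (z, y)) @^-1` M.
  have clS : closed S.
    apply: closed_comp => // p _; apply: cvg_pair; [exact: cvg_id | exact: cvg_cst].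
  have invS : invariant_set beta S by move=> g z Sz; exact: (invM g (z, y) Sz).
  case: (minb S clS invS) => hS.
    by have : S x by []; rewrite hS.
  by have : S x' by rewrite hS.
split.
  move=> M clM invM; apply/seteqP; split.
    by move=> [x y] Mxy; split => //; exists (x, y).
  move=> [x y] [_ [[x0 y0] M0 /= <-]]; exact: (slice M clM invM x0 y0 M0 x).
move=> Z clZ invZ [x y] Zxy B nB.
case: nB => [[P Q]] /= [nP nQ] sPQ.
have [f finj] := countable_injP _ Gcount.
pose F n := [set z : X | exists g, [/\ f g = n, g <> one & beta g z = z]].
have FE : forall n, F n = set0 \/ exists g, g <> one /\ F n = [set z | beta g z = z].
  move=> n; have [[g [fg gn1]]|no] := pselect (exists g, f g = n /\ g <> one).
    right; exists g; split => //; apply/seteqP; split.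
      move=> z [g' [fg' _ eq]]; have -> : g = g' by apply: finj; rewrite ?inE //; congruence.
      exact: eq.
    by move=> z /= eq; exists g.
  left; apply/seteqP; split => // z [g [fg gn1 _]]; apply: no; by exists g.
have Fcl : forall n, closed (F n).
  move=> n; case: (FE n) => [->|[g [_ ->]]]; first exact: closed0.
  exact: fix_closed.
have Fint : forall n, interior (F n) = set0.
  move=> n; case: (FE n) => [->|[g [gn1 ->]]]; last exact: tfree.
  by apply/seteqP; split => // z /interior_subset.
have neP : interior P !=set0 by exists x.
have [x' [Px' nF]] := @baire_compact X HX cX F Fcl Fint (interior P) (@open_interior _ P) neP.
exists (x', y); split; last by apply: sPQ; split => /=; [exact: interior_subset | exact: nbhs_singleton].
split; first exact: (slice Z clZ invZ x y Zxy x').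
move=> g [/= eq]; apply: contrapT => gn1; apply: (nF (f g)); by exists g.
Qed.
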